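(* Let $G$ be a finite simple graph of minimum degree at least $2$, and let $G^{+2}$ be the graph obtained from $G$ by subdividing each edge of $G$ into a path of length $3$ (i.e. replacing each edge $wz$ by a path $wxyz$ with two new vertices $x,y$). Then Sepy has a winning strategy in the Dom-start Disjoint Domination Game played on $G^{+2}$.
   Context: For a vertex $v$, $N[v]$ denotes its closed neighborhood. The Disjoint Domination Game on an isolate-free graph $H$ is played by Dom and Sepy with colors $p$ and $b$; $V_p,V_b$ denote the current sets of vertices of each color. Players alternate; either player may use either color. A move chooses a vertex $v$ and a color $c$ such that (i) $v$ is uncolored and (ii) some $u\in N[v]$ satisfies $N[u]\cap V_c=\emptyset$ (before the move); then $v$ gets color $c$. A player must make a legal move on his turn (no passing). The game ends as soon as either (s* ) some vertex $v$ has $N[v]\subseteq V_p$ or $N[v]\subseteq V_b$ — Sepy wins; or (d* ) both $V_p$ and $V_b$ are dominating sets of $H$ — Dom wins. In the Dom-start game Dom moves first. *)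

(* Defs.v *)
From mathcomp Require Import all_boot.
Set Implicit Arguments. Unset Strict Implicit. Unset Printing Implicit Defensive.

Section Game.
Variables (T : finType) (adj : rel T).

Definition cnbhd (v : T) : {set T} := [set u | (u == v) || adj v u].

Definition dominating (D : {set T}) : bool :=
  [forall u, cnbhd u :&: D != set0].

(* colours: true = p, false = b.  A state is the pair (Vp, Vb). *)
Definition colset (Vp Vb : {set T}) (c : bool) : {set T} := if c then Vp else Vb.

Definition legal (Vp Vb : {set T}) (v : T) (c : bool) : bool :=
  (v \notin Vp) && (v \notin Vb) &&
  [exists u in cnbhd v, cnbhd u :&: colset Vp Vb c == set0].

Definition play (Vp Vb : {set T}) (v : T) (c : bool) : {set T} * {set T} :=
  if c then (v |: Vp, Vb) else (Vp, v |: Vb).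

Definition sepy_end (Vp Vb : {set T}) : bool :=
  [exists v, (cnbhd v \subset Vp) || (cnbhd v \subset Vb)].

Definition dom_end (Vp Vb : {set T}) : bool := dominating Vp && dominating Vb.

(* [SepyWins domToMove Vp Vb]: Sepy has a winning strategy from position
   (Vp, Vb) where Dom is to move iff domToMove = true. *)
Inductive SepyWins : bool -> {set T} -> {set T} -> Prop :=
| SW_end : forall d Vp Vb, sepy_end Vp Vb -> SepyWins d Vp Vb
| SW_sepy : forall Vp Vb v c, ~~ sepy_end Vp Vb -> ~~ dom_end Vp Vb ->
    legal Vp Vb v c ->
    SepyWins true (play Vp Vb v c).1 (play Vp Vb v c).2 ->
    SepyWins false Vp Vb
| SW_dom : forall Vp Vb, ~~ sepy_end Vp Vb -> ~~ dom_end Vp Vb ->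
    (forall v c, legal Vp Vb v c ->
       SepyWins false (play Vp Vb v c).1 (play Vp Vb v c).2) ->
    SepyWins true Vp Vb.

Definition sepy_wins_dom_start : Prop := SepyWins true set0 set0.
End Game.

(* The subdivision G^{+2}: vertices are the original vertices plus one new
   vertex (w,z) for each ordered adjacent pair; the edge wz becomes the path
   w - (w,z) - (z,w) - z. *)
Section Subdiv.
Variables (V : finType) (e : rel V).
Definition darts := {p : V * V | e p.1 p.2}.
Definition sub2_vertex := (V + darts)%type.
Definition sub2_adj : rel sub2_vertex := fun a b =>
  match a, b with
  | inl _, inl _ => false
  | inl w, inr p => (val p).1 == w
  | inr p, inl w => (val p).1 == w
  | inr p, inr q => val q == ((val p).2, (val p).1)
  end.
End Subdiv.

(* Main.v *)
Require Import Defs.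
From mathcomp Require Import all_boot.
Set Implicit Arguments. Unset Strict Implicit. Unset Printing Implicit Defensive.

Lemma I0P (T : finType) (X Y : {set T}) :
  (X :&: Y == set0) <-> (forall u, u \in X -> u \notin Y).
Proof.
split.
- move=> /eqP H u uX; apply/negP => uY.
  have : u \in X :&: Y by rewrite inE uX uY.
  by rewrite H inE.
- move=> H; apply/eqP/setP => u; rewrite !inE.
  by case uX: (u \in X) => //=; rewrite (negbTE (H u uX)).
Qed.

Definition mk (X : Type) (c : bool) (A B : X) := if c then (A, B) else (B, A).

Lemma dom_mk (T : finType) (adj : rel T) c (A B : {set T}) :
  dom_end adj (mk c A B).1 (mk c A B).2 -> dominating adj B.
Proof. by case: c => /andP[]. Qed.

Lemma notdom (T : finType) (adj : rel T) (B : {set T}) u :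
  (forall x, x \in cnbhd adj u -> x \notin B) -> ~~ dominating adj B.
Proof.
move=> H; apply/negP => /forallP /(_ u) /negP; apply; exact/I0P.
Qed.

Lemma sepy_mk (T : finType) (adj : rel T) c (A B : {set T}) v :
  cnbhd adj v \subset A -> sepy_end adj (mk c A B).1 (mk c A B).2.
Proof. by move=> H; apply/existsP; exists v; case: c => /=; rewrite H ?orbT. Qed.

Lemma legal_mk (T : finType) (adj : rel T) c (A B : {set T}) v :
  legal adj (mk c A B).1 (mk c A B).2 v c =
  [&& v \notin A, v \notin B & [exists u in cnbhd adj v, cnbhd adj u :&: A == set0]].
Proof. by case: c; rewrite /legal /= ?andbA // [(v \notin B) && _]andbC. Qed.

Lemma legal_mk_unc (T : finType) (adj : rel T) c (A B : {set T}) v d :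
  legal adj (mk c A B).1 (mk c A B).2 v d -> (v \notin A) && (v \notin B).
Proof. by case: c => /= /andP[/andP[H1 H2] _]; rewrite ?H1 ?H2. Qed.

Lemma play_mk_same (T : finType) c (A B : {set T}) v :
  play (mk c A B).1 (mk c A B).2 v c = mk c (v |: A) B.
Proof. by case: c. Qed.

Lemma play_mk_other (T : finType) c (A B : {set T}) v :
  play (mk c A B).1 (mk c A B).2 v (~~ c) = mk c A (v |: B).
Proof. by case: c. Qed.


Lemma in_cnbhd (T : finType) (adj : rel T) u v : (u \in cnbhd adj v) = (u == v) || adj v u.
Proof. by rewrite inE. Qed.

Lemma dart_neq (V : finType) (e : rel V) (p : darts e) :
  irreflexive e -> (val p).1 != (val p).2.
Proof. by move=> ir; apply/eqP => E; move: (valP p); rewrite /= E ir. Qed.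

Lemma rev_ex (V : finType) (e : rel V) (p : darts e) :
  symmetric e -> exists q : darts e, val q = ((val p).2, (val p).1).
Proof.
move=> sy; have H : e (((val p).2, (val p).1)).1 (((val p).2, (val p).1)).2.
  by rewrite /= sy; exact: (valP p).
by exists (exist (fun x : V * V => e x.1 x.2) _ H).
Qed.

Lemma cnbhd_r (V : finType) (e : rel V) (p q : darts e) u :
  val q = ((val p).2, (val p).1) ->
  u \in cnbhd (@sub2_adj V e) (inr p) ->
  [\/ u = inr p, u = inl (val p).1 | u = inr q].
Proof.
move=> Hq; rewrite in_cnbhd => /orP[/eqP->|]; first by constructor 1.
case: u => [a|r] /=.
  by move/eqP => <-; constructor 2.
move/eqP => E; constructor 3; congr inr; apply: val_inj; exact: (etrans E (esym Hq)).
Qed.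

Lemma cnbhd_l_disj (V : finType) (e : rel V) (z z2 : V) u :
  z != z2 -> u \in cnbhd (@sub2_adj V e) (inl z) -> u \notin cnbhd (@sub2_adj V e) (inl z2).
Proof.
move=> nz; rewrite !in_cnbhd; case: u => [a|r] /=.
  rewrite !orbF => /eqP [->]; apply/eqP => [[E]]; by rewrite E eqxx in nz.
move/eqP=> ->; apply/eqP => E; by rewrite E eqxx in nz.
Qed.

Lemma bneq (d c : bool) : d != c -> d = ~~ c.
Proof. by case: d; case: c. Qed.

Definition Inv (V : finType) (e : rel V) (w : V) (A B : {set sub2_vertex e}) : Prop :=
  [/\ inl w \in A,
      (forall u, u \in cnbhd (@sub2_adj V e) (inl w) -> u \notin B) &
      (forall p q : darts e, (val p).1 = w -> val q = ((val p).2, (val p).1) ->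
         inr p \notin A ->
         inr q \notin B /\ (forall u, u \in cnbhd (@sub2_adj V e) (inl (val p).2) -> u \notin A))].

Lemma A_of_B (V : finType) (e : rel V) (sy : symmetric e) (ir : irreflexive e)
  c w (A B : {set sub2_vertex e}) (p q : darts e) :
  (forall A' B', #|cnbhd (@sub2_adj V e) (inl w) :\: A'| < #|cnbhd (@sub2_adj V e) (inl w) :\: A| ->
     Inv w A' B' -> SepyWins (@sub2_adj V e) false (mk c A' B').1 (mk c A' B').2) ->
  Inv w A B -> (val p).1 = w -> val q = ((val p).2, (val p).1) -> inr p \notin A ->
  SepyWins (@sub2_adj V e) true (mk c (inr p |: A) B).1 (mk c (inr p |: A) B).2.
Proof.
move=> IH [Iw I2 I3] Hp Hq pA.
have [qB zA] := I3 p q Hp Hq pA.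
set z := (val p).2 in zA Hq *.
have wz : w != z by rewrite -Hp; exact: dart_neq.
have pw : inr p \in cnbhd (@sub2_adj V e) (inl w) by rewrite in_cnbhd /= Hp eqxx ?orbT.
have pB : inr p \notin B := I2 _ pw.
have wB : inl w \notin B by apply: I2; rewrite in_cnbhd eqxx.
have qz : inr q \in cnbhd (@sub2_adj V e) (inl z) by rewrite in_cnbhd /= Hq eqxx ?orbT.
have pz : inr p \notin cnbhd (@sub2_adj V e) (inl z) by rewrite in_cnbhd /= Hp (negbTE wz).
have qp : inr q != inr p :> sub2_vertex e.
  apply/eqP => [[E]]; move: Hq; rewrite E => /(congr1 fst); rewrite /= -/z Hp => E2.
  by rewrite E2 eqxx in wz.
have qA1 : inr q \notin inr p |: A by rewrite in_setU1 negb_or qp /= zA.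
set A1 := inr p |: A.
have pA1 : inr p \in A1 by rewrite in_setU1 eqxx.
have wA1 : inl w \in A1 by rewrite in_setU1 Iw orbT.
have AA1 : A \subset A1 by apply/subsetP => x xA; rewrite in_setU1 xA orbT.
case: (boolP (sepy_end (@sub2_adj V e) (mk c A1 B).1 (mk c A1 B).2)) => [se|nse].
  by apply: SW_end.
apply: SW_dom => //.
  apply/negP => /dom_mk; apply/negP; apply: (@notdom _ _ _ (inr p)).
  by move=> x /(cnbhd_r Hq) [->|->|->]; rewrite ?Hp.
move=> v d Hleg; have /andP[vA1 vB] := legal_mk_unc Hleg.
have [A2 [B2 [-> Hcase]]] : exists A2 B2,
    play (mk c A1 B).1 (mk c A1 B).2 v d = mk c A2 B2 /\
    ((A2 = v |: A1 /\ B2 = B) \/ (A2 = A1 /\ B2 = v |: B)).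
  case: (boolP (d == c)) => [/eqP->|dc].
    by exists (v |: A1), B; rewrite play_mk_same; split; [|left].
  rewrite (bneq dc).
  by exists A1, (v |: B); rewrite play_mk_other; split; [|right].
have A1A2 : A1 \subset A2.
  by case: Hcase => [[-> _]|[-> _]] //; apply/subsetP => x xA; rewrite in_setU1 xA orbT.
have pA2 : inr p \in A2 by apply: (subsetP A1A2).
have wA2 : inl w \in A2 by apply: (subsetP A1A2).
have AA2 : A \subset A2 by apply: subset_trans AA1 A1A2.
have nB2 : forall x, x \in A1 -> x \notin B -> x \notin B2.
  move=> x xA1 xB; case: Hcase => [[_ ->]|[_ ->]] //.
  rewrite in_setU1 negb_or xB andbT; apply/eqP => E; by rewrite -E xA1 in vA1.
have pB2 := nB2 _ pA1 pB.
have wB2 := nB2 _ wA1 wB.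
case: (boolP [&& inr q \notin A2, inr q \notin B2 & cnbhd (@sub2_adj V e) (inl z) :&: A2 == set0]).
  case/and3P => q2A q2B zA2.
  case: (boolP (sepy_end (@sub2_adj V e) (mk c A2 B2).1 (mk c A2 B2).2)) => [se|nse2].
    by apply: SW_end.
  apply: (@SW_sepy _ _ _ _ (inr q) c) => //.
  - apply/negP => /dom_mk; apply/negP; apply: (@notdom _ _ _ (inr p)).
    by move=> x /(cnbhd_r Hq) [->|->|->]; rewrite ?Hp.
  - rewrite legal_mk q2A q2B /=; apply/existsP; exists (inl z).
    by rewrite in_cnbhd /= Hq eqxx ?orbT zA2.
  - rewrite play_mk_same; apply: SW_end; apply: (@sepy_mk _ _ _ _ _ (inr p)).
    apply/subsetP => x /(cnbhd_r Hq) [->|->|->]; rewrite in_setU1 ?pA2 ?Hp ?wA2 ?orbT //.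
    by rewrite eqxx.
rewrite !negb_and !negbK => Hno.
have Hv : (A2 = v |: A1 /\ B2 = B /\ v \in cnbhd (@sub2_adj V e) (inl z)) \/
          (A2 = A1 /\ B2 = v |: B /\ v = inr q).
  case: Hcase => [[eA eB]|[eA eB]]; subst A2 B2.
    left; split => //; split => //.
    case/or3P: Hno.
    - rewrite in_setU1 (negbTE qA1) orbF => /eqP <-; exact: qz.
    - by rewrite (negbTE qB).
    - case: (boolP (v \in cnbhd (@sub2_adj V e) (inl z))) => // vz /negP; case.
      apply/I0P => u uz; rewrite in_setU1 negb_or in_setU1 negb_or zA ?andbT //.
      apply/andP; split; apply/eqP => E; [by rewrite -E uz in vz | by rewrite -E uz in pz].
  right; split => //; split => //.
  case/or3P: Hno.
  - by rewrite (negbTE qA1).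
  - rewrite in_setU1 (negbTE qB) orbF => /eqP ->; done.
  - case/negP; apply/I0P => u uz; rewrite in_setU1 negb_or zA ?andbT //.
    by apply/eqP => E; rewrite -E uz in pz.
apply: IH.
  apply: proper_card; apply/properP; split.
    apply/subsetP => x; rewrite !inE => /andP[xA xN]; rewrite xN andbT.
    by apply/negP => xA'; move/negP: xA; apply; apply: (subsetP AA2).
  by exists (inr p); rewrite !in_setD ?pw ?pA2 ?pA.
split => //.
  move=> u uw; case: Hv => [[_ [-> _]]|[_ [-> ->]]]; first exact: I2.
  rewrite in_setU1 negb_or I2 // andbT; apply/eqP => E; move: uw.
  by rewrite E in_cnbhd /= Hq /= eq_sym (negbTE wz).
move=> p2 q2 Hp2 Hq2 p2A2.
have p2A : inr p2 \notin A by apply/negP => H; move/negP: p2A2; apply; apply: (subsetP AA2).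
have [q2B z2A] := I3 p2 q2 Hp2 Hq2 p2A.
have zz2 : z != (val p2).2.
  apply/eqP => E; have pp2 : p = p2.
    apply: val_inj; rewrite /= (surjective_pairing (val p)) (surjective_pairing (val p2)).
    by rewrite Hp Hp2 -E.
  by move/negP: p2A2; apply; rewrite -pp2.
have wz2 : w != (val p2).2 by rewrite -Hp2; exact: dart_neq.
split.
  case: Hv => [[_ [-> _]]|[_ [-> ->]]] //.
  rewrite in_setU1 negb_or q2B andbT; apply/eqP => [[E]].
  by move: (congr1 (fun r : darts e => (val r).1) E); rewrite /= Hq Hq2 /= => E2; rewrite E2 eqxx in zz2.
move=> u uz2.
have up : u != inr p.
  apply/eqP => E; move: uz2; rewrite E in_cnbhd /= Hp (negbTE wz2).
  done.
case: Hv => [[-> [_ vz]]|[-> _]].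
  rewrite /A1 !in_setU1 !negb_or up (z2A _ uz2) /= andbT.
  apply/eqP => E; move: (cnbhd_l_disj zz2 vz); by rewrite -E uz2.
by rewrite /A1 !in_setU1 !negb_or up (z2A _ uz2).
Qed.

Lemma B_lemma (V : finType) (e : rel V) (sy : symmetric e) (ir : irreflexive e)
  c w (A B : {set sub2_vertex e}) :
  Inv w A B -> SepyWins (@sub2_adj V e) false (mk c A B).1 (mk c A B).2.
Proof.
have [n] := ubnP #|cnbhd (@sub2_adj V e) (inl w) :\: A|.
elim: n A B => // n IHn A B /ltnSE Hlt Hinv.
case: (Hinv) => Iw I2 I3.
case: (boolP (sepy_end (@sub2_adj V e) (mk c A B).1 (mk c A B).2)) => [se|nse].
  by apply: SW_end.
case: (boolP (cnbhd (@sub2_adj V e) (inl w) \subset A)) => [sub|/subsetPn [u uN uA]].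
  by move/negP: nse; case; apply: sepy_mk sub.
case: u uN uA => [a|p] uN uA.
  move: uN; rewrite in_cnbhd /= orbF => /eqP [E]; by rewrite E Iw in uA.
have Hp : (val p).1 = w by move: uN; rewrite in_cnbhd /= => /eqP.
have [q Hq] := rev_ex p sy.
have [qB zA] := I3 p q Hp Hq uA.
have qz : inr q \in cnbhd (@sub2_adj V e) (inl (val p).2) by rewrite in_cnbhd /= Hq eqxx ?orbT.
have Hp' : val p = ((val q).2, (val q).1) by rewrite Hq; case: (val p).
apply: (@SW_sepy _ _ _ _ (inr p) c) => //.
- apply/negP => /dom_mk; apply/negP; exact: (@notdom _ _ _ (inl w)).
- rewrite legal_mk uA I2 //=; apply/existsP; exists (inr q).
  rewrite in_cnbhd /= Hq eqxx ?orbT /=; apply/I0P => x /(cnbhd_r Hp') [->|->|->] //.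
  + exact: zA.
  + by apply: zA; rewrite Hq /= in_cnbhd eqxx.
- rewrite play_mk_same; apply: (A_of_B sy ir _ Hinv Hp Hq uA).
  move=> A' B' lt' Hinv'; apply: IHn => //; exact: leq_trans lt' Hlt.
Qed.

Lemma Inv_init (V : finType) (e : rel V) (ir : irreflexive e) (a : V) :
  Inv a (inl a |: set0) (set0 : {set sub2_vertex e}).
Proof.
split; first by rewrite in_setU1 eqxx.
  by move=> u _; rewrite inE.
move=> p q Hp Hq _; split; first by rewrite inE.
move=> u uz; rewrite setU0 inE; apply/eqP => E.
have az : (val p).2 != a by rewrite -Hp eq_sym; exact: dart_neq.
move: (cnbhd_l_disj az uz); by rewrite E in_cnbhd eqxx.
Qed.

Theorem proposition7 (V : finType) (e : rel V) :
  symmetric e -> irreflexive e -> 0 < #|V| ->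
  (forall v : V, 2 <= #|[set u | e v u]|) ->
  sepy_wins_dom_start (@sub2_adj V e).
Proof.
move=> sy ir V0 deg; rewrite /sepy_wins_dom_start.
apply: SW_dom.
- apply/existsP => [[v]]; rewrite orbb subset0 => /eqP E.
  have : v \in cnbhd (@sub2_adj V e) v by rewrite in_cnbhd eqxx.
  by rewrite E inE.
- case/card_gt0P: V0 => w0 _.
  apply/negP => /andP [d _]; move: d; apply/negP; apply: (@notdom _ _ _ (inl w0)).
  by move=> x _; rewrite inE.
move=> v d _.
have -> : play set0 set0 v d = mk d (v |: set0) set0 by case: d.
case: v => [a|p].
  by apply: (B_lemma sy ir); exact: Inv_init.
set a := (val p).1; set b := (val p).2.
have [b' ab' nb] : exists2 b', e a b' & b' != b.
  case: (boolP [exists b', e a b' && (b' != b)]).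
    by case/existsP => b' /andP[H1 H2]; exists b'.
  rewrite negb_exists => /forallP H.
  have : [set u | e a u] \subset [set b].
    apply/subsetP => u; rewrite !inE => au; move: (H u); rewrite au /= negbK.
    done.
  move/subset_leq_card; rewrite cards1 => H1; move: (deg a) => H2.
  by have := leq_trans H2 H1.
pose p' := exist (fun x : V * V => e x.1 x.2) (a, b') ab' : darts e.
have [q Hq] := rev_ex p sy.
case: (boolP (sepy_end (@sub2_adj V e) (mk d (inr p |: set0) set0).1 (mk d (inr p |: set0) set0).2)) => [se|nse].
  by apply: SW_end.
apply: (@SW_sepy _ _ _ _ (inl a) d) => //.
- apply/negP => /dom_mk; apply/negP; apply: (@notdom _ _ _ (inl a)).
  by move=> x _; rewrite inE.
- rewrite legal_mk !inE /=; apply/existsP; exists (inr p').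
  rewrite in_cnbhd /= eqxx ?orbT /=; apply/I0P => x xp'.
  rewrite setU0 inE; apply/eqP => E; move: xp'; rewrite E in_cnbhd /=.
  apply/negP; rewrite negb_or; apply/andP; split.
    apply/eqP => [[E2]]; move: (congr1 (fun r : darts e => (val r).2) E2).
    by rewrite /= => E3; move/eqP: nb; apply; rewrite -E3.
  apply/eqP => E2; have E3 := congr1 snd E2; move: (dart_neq p ir).
  by rewrite /= in E3; rewrite E3 /= eqxx.
- rewrite play_mk_same setUCA.
  apply: (@A_of_B V e sy ir d a (inl a |: set0) set0 p q).
  + by move=> A' B' _ H; exact: (@B_lemma V e sy ir d a A' B' H).
  + exact: Inv_init.
  + done.
  + exact: Hq.
  + by rewrite !inE.
Qed.
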